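(* Let $G$ be a strongly connected weighted digraph and consider a finite number of tokens initially located at some of its nodes. Suppose that, at each iteration, each node that possesses a token passes it to one of its out-neighbors via an out-edge of minimum weight (among its out-edges) and adds a positive constant to the weight of that edge. Then after a finite number of iterations every node has been visited by (i.e., has held) at least one token.
   Context: A weighted digraph $G=(V,E,A)$ has finite vertex set $V$, edge set $E\subseteq V\times V$, and positive weights $a_{ij}$ on the edges $(v_i,v_j)\in E$. It is strongly connected if there is a directed path between every ordered pair of distinct vertices. An out-neighbor of $v$ is a vertex $w$ with $(v,w)\in E$. *)

(* Defs.v *)
From HB Require Import structures.
From mathcomp Require Import all_boot all_order all_algebra.
From mathcomp Require Import reals.
Set Implicit Arguments. Unset Strict Implicit. Unset Printing Implicit Defensive.
Import Order.TTheory GRing.Theory Num.Theory.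
Local Open Scope ring_scope.

(* A weighted digraph: finite vertex type V, edge relation E, weights a
   (only the values on edges matter), positive on edges. *)
Definition positive_weights (R : realType) (V : finType) (E : rel V)
  (a : V -> V -> R) : Prop :=
  forall i j, E i j -> 0 < a i j.

Definition strongly_connected (V : finType) (E : rel V) : Prop :=
  forall x y, x != y -> connect E x y.

(* W t  : edge weights before iteration t (W 0 = a),
   S t  : set of nodes holding a token before iteration t,
   nxt t v : out-neighbour to which v passes its token at iteration t.
   Each token-holding node v passes along an out-edge of minimum current
   weight (ties broken arbitrarily), and that edge's weight increases by c. *)
Definition token_run (R : realType) (V : finType) (E : rel V)
  (a : V -> V -> R) (c : R) (S0 : {set V})
  (W : nat -> V -> V -> R) (S : nat -> {set V}) (nxt : nat -> V -> V) : Prop :=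
  [/\ W 0%N = a, S 0%N = S0,
      (forall t v, v \in S t ->
         E v (nxt t v) /\ (forall u, E v u -> W t v (nxt t v) <= W t v u)),
      (forall t, S t.+1 = [set nxt t v | v in S t]) &
      (forall t i j, W t.+1 i j =
         W t i j + (if (i \in S t) && (j == nxt t i) then c else 0))].

(* Main.v *)
Require Import Defs.
From HB Require Import structures.
From mathcomp Require Import all_boot all_order all_algebra.
From mathcomp Require Import reals.
From Stdlib Require Import Classical.
Import Order.TTheory GRing.Theory Num.Theory.
Local Open Scope ring_scope.

Theorem lemma4p3 (R : realType) (V : finType) (E : rel V) (a : V -> V -> R)
  (c : R) (S0 : {set V}) (W : nat -> V -> V -> R) (S : nat -> {set V})
  (nxt : nat -> V -> V) :
  strongly_connected E -> positive_weights E a -> 0 < c -> S0 != set0 ->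
  token_run E a c S0 W S nxt ->
  exists T : nat, forall v : V, exists2 t : nat, (t <= T)%N & v \in S t.
Proof.
move=> Hsc _ c0 S0n [W0 HS0 Hmin HS HW].
have Sne : forall t, exists v, v \in S t.
  elim=> [|t [v Hv]]; first by case/set0Pn: S0n => v Hv; exists v; rewrite HS0.
  by exists (nxt t v); rewrite HS imset_f.
have Wmono : forall t i j, W t i j <= W t.+1 i j.
  move=> t i j; rewrite HW lerDl; case: ifP => _ //; exact: ltW.
have WmonoN : forall t s i j, (t <= s)%N -> W t i j <= W s i j.
  move=> t s i j /subnK <-; elim: (s - t)%N => [|k IH] //.
  by rewrite addSn (le_trans IH).
have min_idl : forall x y : R, x <= y -> Num.min x y = x by move=> x y /min_idPl.
pose inf v := forall N, exists t, (N <= t)%N /\ v \in S t.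
have inf_ex : exists v, inf v.
  apply: NNPP => Hno.
  have Hb : forall v, exists N, forall t, (N <= t)%N -> v \notin S t.
    move=> v; apply: NNPP => Hv; apply: Hno; exists v => N.
    apply: NNPP => HN; apply: Hv; exists N => t Nt; apply/negP => vt.
    by apply: HN; exists t.
  have [N HN] : exists N, forall v, v \in enum V -> forall t, (N <= t)%N -> v \notin S t.
    elim: (enum V) => [|x s [N HN]]; first by exists 0%N.
    have [Nx HNx] := Hb x.
    exists (maxn N Nx) => v; rewrite inE => /orP [/eqP -> | vs] t Ht.
      by apply: HNx; apply: leq_trans Ht; apply: leq_maxr.
    by apply: HN => //; apply: leq_trans Ht; apply: leq_maxl.
  have [v Hv] := Sne N.
  by move: (HN v (mem_enum _ v) N (leqnn N)); rewrite Hv.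
have inf_step : forall v u, inf v -> E v u -> inf u.
  move=> v u Hv Evu N.
  apply: NNPP => Hno.
  have Hnot : forall t, (N <= t)%N -> v \in S t -> nxt t v <> u.
    move=> t Nt vt eq; apply: Hno; exists t.+1; split; first exact: leqW.
    by rewrite HS -eq imset_f.
  pose B := W N v u.
  have WB : forall t, (N <= t)%N -> W t v u = B.
    move=> t /subnK <-; elim: (t - N)%N => [|k IH] //.
    rewrite addSn HW IH; case: ifP => [/andP [vk /eqP eq]|_]; last by rewrite addr0.
    by exfalso; apply: (Hnot (k + N)%N (leq_addl _ _) vk).
  pose Phi t := \sum_(x : V) Num.min (W t v x) (B + c).
  have Phimono : forall t, Phi t <= Phi t.+1.
    move=> t; apply: ler_sum => x _.
    rewrite le_min !ge_min lexx orbT andbT.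
    by rewrite Wmono.
  have PhimonoN : forall t s, (t <= s)%N -> Phi t <= Phi s.
    move=> t s /subnK <-; elim: (s - t)%N => [|k IH] //.
    by rewrite addSn (le_trans IH).
  have Phiinc : forall t, (N <= t)%N -> v \in S t -> Phi t + c <= Phi t.+1.
    move=> t Nt vt; rewrite /Phi (bigD1 (nxt t v)) //= [X in _ <= X](bigD1 (nxt t v)) //=.
    have [Ey Hm] := Hmin t v vt.
    have le1 : W t v (nxt t v) <= B by rewrite -(WB t Nt); exact: Hm.
    have e1 : W t.+1 v (nxt t v) = W t v (nxt t v) + c by rewrite HW vt eqxx.
    have lBc : B <= B + c by rewrite lerDl ltW.
    rewrite e1 (min_idl _ _ (le_trans le1 lBc)).
    rewrite (min_idl _ _ (_ : _ <= B + c)); last by rewrite lerD2r.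
    rewrite addrAC lerD2l; apply: ler_sum => x _.
    by rewrite le_min !ge_min lexx orbT andbT Wmono.
  have Phiub : forall t, Phi t <= (B + c) *+ #|V|.
    move=> t; rewrite -sumr_const; apply: ler_sum => x _; by rewrite ge_min lexx orbT.
  have Hk : forall k, exists t, (N <= t)%N /\ Phi N + c *+ k <= Phi t.
    elim=> [|k [t [Nt Ht]]]; first by exists N; rewrite mulr0n addr0.
    have [t' [tt' vt']] := Hv t.
    exists t'.+1; split; first by apply: leqW; apply: leq_trans tt'.
    rewrite mulrS addrCA.
    apply: le_trans (Phiinc t' (leq_trans Nt tt') vt').
    by rewrite addrC lerD2r (le_trans Ht) // PhimonoN.
  pose D := ((B + c) *+ #|V| - Phi N) / c.
  have [t [_ Ht]] := Hk (Num.bound `|D|).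
  have := archi_boundP (normr_ge0 D).
  move=> Hb.
  have : (B + c) *+ #|V| - Phi N < c *+ Num.bound `|D|.
    rewrite -[c *+ _]mulr_natr [c * _]mulrC -ltr_pdivrMr //.
    exact: le_lt_trans (ler_norm _) Hb.
  have := Phiub t.
  move=> h1 h2.
  have := le_trans Ht h1.
  rewrite -lerBrDl => h3.
  by move: (lt_le_trans h2 h3); rewrite ltxx.
have [v0 Hv0] := inf_ex.
have allinf : forall y, inf y.
  move=> y; have [<- //|ne] := eqVneq v0 y.
  have /connectP [p Hp ->] := Hsc v0 y ne.
  elim: p v0 Hv0 {ne} Hp => [|z p IH] x Hx //= /andP [Exz Hp].
  exact: IH (inf_step x z Hx Exz) Hp.
have [T HT] : exists T, forall v, v \in enum V -> exists2 t, (t <= T)%N & v \in S t.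
  elim: (enum V) => [|x s [N HN]]; first by exists 0%N.
  have [tx [_ Htx]] := allinf x 0%N.
  exists (maxn N tx) => v; rewrite inE => /orP [/eqP -> | vs].
    by exists tx => //; apply: leq_maxr.
  have [t Ht Hvt] := HN v vs; exists t => //; apply: leq_trans Ht (leq_maxl _ _).
by exists T => v; apply: HT; rewrite mem_enum.
Qed.
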